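(* Fix an integer $k\geq1$ and $V=\{0,\ldots,k\}$. If a Boolean function $\varphi$ on $V$ satisfies $\mathrm{eul}(\varphi)=0$, then $\varphi$ is fragmentable.
   Context: A valuation is a subset $\nu\subseteq V$; $\nu^{(l)}$ is $\nu$ with membership of $l$ flipped. A Boolean function on $V$ is a map $\varphi:2^V\to\{\text{false},\text{true}\}$; $\mathrm{eul}(\varphi)=\sum_{\nu:\varphi(\nu)=\text{true}}(-1)^{|\nu|}$. $\varphi$ is degenerate if there is $l\in V$ with $\varphi(\nu)=\varphi(\nu^{(l)})$ for all $\nu$. Two functions are disjoint if no valuation satisfies both. A $\neg$-$\vee$-template is a Boolean circuit all of whose internal gates are $\neg$- or $\vee$-gates (a single leaf is allowed); its leaves $l_0,\ldots,l_n$ are holes. $T[\varphi_0,\ldots,\varphi_n]$ is the function obtained by substituting $\varphi_i$ for $l_i$; it is deterministic if, for every $\vee$-gate of the template, any two distinct inputs compute disjoint functions. $\varphi$ is fragmentable if there exist a $\neg$-$\vee$-template $T$ and degenerate functions $\varphi_0,\ldots,\varphi_n$ (one per hole) such that $T[\varphi_0,\ldots,\varphi_n]$ is deterministic and equivalent to $\varphi$. *)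

(* Defs.v *)
From mathcomp Require Import all_boot all_order all_algebra.
Set Implicit Arguments. Unset Strict Implicit. Unset Printing Implicit Defensive.
Import GRing.Theory Num.Theory.

(* Variables V = {0,...,k} are 'I_k.+1; a valuation is a subset of V. *)
Definition valuation (k : nat) := {set 'I_k.+1}.

Definition bfun (k : nat) := valuation k -> bool.

Definition flip (k : nat) (nu : valuation k) (l : 'I_k.+1) : valuation k :=
  if l \in nu then nu :\ l else l |: nu.

Definition eul (k : nat) (phi : bfun k) : int :=
  (\sum_(nu : {set 'I_k.+1} | phi nu) (-1) ^+ #|nu|)%R.

Definition degenerate (k : nat) (phi : bfun k) : Prop :=
  exists l : 'I_k.+1, forall nu : valuation k, phi nu = phi (flip nu l).

Definition disjoint_fun (k : nat) (f g : bfun k) : Prop :=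
  forall nu : valuation k, ~~ (f nu && g nu).

(* A neg-or template with its holes already substituted: T[phi_0,...,phi_n].
   Templates are represented as trees (formulas); every leaf is a distinct
   hole carrying the function substituted for it. *)
Inductive subst_template (k : nat) : Type :=
| Hole of bfun k
| NegG of subst_template k
| OrG of seq (subst_template k).

Arguments Hole {k}. Arguments NegG {k}. Arguments OrG {k}.

Definition dflt_tmpl (k : nat) : subst_template k := Hole (fun _ => false).

Fixpoint eval (k : nat) (t : subst_template k) (nu : valuation k) : bool :=
  match t with
  | Hole f => f nu
  | NegG t' => ~~ eval t' nu
  | OrG ts => has (fun s => eval s nu) ts
  end.

Inductive deterministic (k : nat) : subst_template k -> Prop :=
| det_hole f : deterministic (Hole f)
| det_neg t : deterministic t -> deterministic (NegG t)
| det_or ts :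
    (forall i, i < size ts -> deterministic (nth (dflt_tmpl k) ts i)) ->
    (forall i j, i < size ts -> j < size ts -> i != j ->
       disjoint_fun (eval (nth (dflt_tmpl k) ts i))
                    (eval (nth (dflt_tmpl k) ts j))) ->
    deterministic (OrG ts).

(* Every hole is filled by a degenerate function; or-gates have at least one
   input (a genuine circuit gate). *)
Inductive degenerate_holes (k : nat) : subst_template k -> Prop :=
| dh_hole f : degenerate f -> degenerate_holes (Hole f)
| dh_neg t : degenerate_holes t -> degenerate_holes (NegG t)
| dh_or ts : 0 < size ts ->
    (forall i, i < size ts -> degenerate_holes (nth (dflt_tmpl k) ts i)) ->
    degenerate_holes (OrG ts).

Definition fragmentable (k : nat) (phi : bfun k) : Prop :=
  exists t : subst_template k,
    [/\ degenerate_holes t, deterministic t & forall nu, eval t nu = phi nu].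

(* Main.v *)
Require Import Defs.
From mathcomp Require Import all_boot all_order all_algebra.
From mathcomp Require Import zify.
Set Implicit Arguments. Unset Strict Implicit. Unset Printing Implicit Defensive.
Import GRing.Theory Num.Theory.

Lemma in_flip k (nu : valuation k) l x : (x \in flip nu l) = (x == l) (+) (x \in nu).
Proof.
rewrite /flip; case: ifP => H; rewrite !inE; case: eqVneq => [->|] //=; by rewrite H.
Qed.

Lemma flipK k l (nu : valuation k) : flip (flip nu l) l = nu.
Proof. by apply/setP => x; rewrite !in_flip addbA addbb. Qed.

Lemma flip_eq k l (mu nu : valuation k) : (flip mu l == nu) = (mu == flip nu l).
Proof. by apply/eqP/eqP => [<-|->]; rewrite flipK. Qed.

Lemma flip_inj_eq k l (mu nu : valuation k) : (flip mu l == flip nu l) = (mu == nu).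
Proof. by rewrite flip_eq flipK. Qed.

Definition sd k (A B : valuation k) : valuation k := (A :\: B) :|: (B :\: A).

Lemma in_sd k (A B : valuation k) x : (x \in sd A B) = (x \in A) (+) (x \in B).
Proof. by rewrite !inE; case: (x \in A); case: (x \in B). Qed.

Lemma sd_flip k (nu o : valuation k) l : sd (flip nu l) o = flip (sd nu o) l.
Proof. by apply/setP => x; rewrite in_sd !in_flip in_sd addbA. Qed.

Lemma sdxx k (A : valuation k) : sd A A = set0.
Proof. by apply/setP => x; rewrite in_sd addbb inE. Qed.

Lemma sd_eq0 k (A B : valuation k) : sd A B = set0 -> A = B.
Proof.
move=> H; apply/setP => x; have := congr1 (fun S : {set 'I_k.+1} => x \in S) H; rewrite in_sd inE.
by case: (x \in A); case: (x \in B).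
Qed.

Lemma odd_sd k (A B : valuation k) : odd #|sd A B| = odd #|A| (+) odd #|B|.
Proof.
rewrite -(cardsID B A) -(cardsID A B) /sd cardsU.
have -> : (A :\: B) :&: (B :\: A) = set0.
  by apply/setP => x; rewrite !inE; case: (x \in A); case: (x \in B).
rewrite cards0 subn0 setIC !oddD.
by case: (odd _); case: (odd _); case: (odd _).
Qed.

Definition rep k (S : {set {set 'I_k.+1}}) :=
  exists t : subst_template k,
    [/\ degenerate_holes t, deterministic t & forall nu, eval t nu = (nu \in S)].

Lemma or2 k (ta tb : subst_template k) :
  degenerate_holes ta -> degenerate_holes tb -> deterministic ta -> deterministic tb ->
  (forall nu, ~~ (eval ta nu && eval tb nu)) ->
  degenerate_holes (OrG [:: ta; tb]) /\ deterministic (OrG [:: ta; tb]).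
Proof.
move=> ha hb da db Hd; split.
  by apply: dh_or => // -[|[|i]].
apply: det_or; first by move=> [|[|i]].
move=> [|[|i]] [|[|j]] //= _ _ _ nu;
  first [exact: Hd | rewrite andbC; exact: Hd].
Qed.

Lemma rep_union k (A B : {set {set 'I_k.+1}}) : rep A -> rep B ->
  (forall nu, ~~ ((nu \in A) && (nu \in B))) -> rep (A :|: B).
Proof.
move=> [ta [ha da ea]] [tb [hb db eb]] H.
have [h d] := or2 ha hb da db (fun nu => ltac:(rewrite ea eb; exact: H nu)).
by exists (OrG [:: ta; tb]); split=> // nu /=; rewrite ea eb inE orbF.
Qed.

Lemma rep_neg k (A : {set {set 'I_k.+1}}) : rep A -> rep (~: A).
Proof.
move=> [ta [ha da ea]]; exists (NegG ta); split; try by constructor.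
by move=> nu /=; rewrite ea inE.
Qed.

Lemma rep_diff k (A B : {set {set 'I_k.+1}}) : rep A -> rep B ->
  (forall nu, nu \in B -> nu \in A) -> rep (A :\: B).
Proof.
move=> ra rb H.
have -> : A :\: B = ~: (~: A :|: B).
  by apply/setP => nu; rewrite !inE negb_or negbK andbC.
apply/rep_neg/rep_union => //; first exact: rep_neg.
move=> nu; rewrite inE; case E: (nu \in B); rewrite ?andbF //.
by rewrite (H _ E).
Qed.

Lemma rep0 k : rep (set0 : {set {set 'I_k.+1}}).
Proof.
exists (Hole (fun _ => false)); split; [constructor; exists ord0 => // | constructor |].
by move=> nu; rewrite inE.
Qed.

Lemma rep_edge k (nu : valuation k) l : rep [set nu; flip nu l].
Proof.
exists (Hole (fun mu => mu \in [set nu; flip nu l])); split => //; last constructor.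
constructor; exists l => mu.
by rewrite !inE flip_eq flip_inj_eq orbC.
Qed.

Lemma neq_card k (a b o : valuation k) : #|sd a o| != #|sd b o| -> a != b.
Proof. by apply: contra => /eqP ->. Qed.

Lemma rep_pair k n : forall e o : valuation k, #|sd e o| = n.*2.+1 -> rep [set e; o].
Proof.
elim: n => [|n IH] e o H.
  move/eqP: H => /cards1P [l Hl].
  have : sd (flip e l) o = set0.
    by rewrite sd_flip Hl; apply/setP => x; rewrite in_flip !inE; case: (x == l).
  move/sd_eq0 => <-; exact: rep_edge.
have [l Hl] : exists l, l \in sd e o by apply/card_gt0P; rewrite H.
set x1 := flip e l.
have H1 : #|sd x1 o| = n.*2.+2.
  move: (cardsD1 l (sd e o)); rewrite Hl H doubleS add1n => -[] ->.
  by rewrite /x1 sd_flip /flip Hl.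
have [l' Hl'] : exists l', l' \in sd x1 o by apply/card_gt0P; rewrite H1.
set x2 := flip x1 l'.
have H2 : #|sd x2 o| = n.*2.+1.
  move: (cardsD1 l' (sd x1 o)); rewrite Hl' H1 add1n => -[] ->.
  by rewrite /x2 sd_flip /flip Hl'.
have H0 : #|sd o o| = 0 by rewrite sdxx cards0.
have ne1 : e != x1 by apply: (@neq_card _ _ _ o); rewrite H H1; lia.
have ne2 : e != x2 by apply: (@neq_card _ _ _ o); rewrite H H2; lia.
have ne3 : e != o by apply: (@neq_card _ _ _ o); rewrite H H0; lia.
have ne4 : x1 != x2 by apply: (@neq_card _ _ _ o); rewrite H1 H2; lia.
have ne5 : x1 != o by apply: (@neq_card _ _ _ o); rewrite H1 H0; lia.
have ne6 : x2 != o by apply: (@neq_card _ _ _ o); rewrite H2 H0; lia.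
have rU : rep ([set e; x1] :|: [set x2; o]).
  apply: rep_union; [exact: rep_edge | exact: IH |].
  move=> nu; apply/negP; rewrite !inE => /andP [/orP [] /eqP -> /orP [] /eqP E];
  [move: ne2|move: ne3|move: ne4|move: ne5]; by rewrite E eqxx.
have rD := rep_diff rU (rep_edge x1 l').
have -> : [set e; o] = ([set e; x1] :|: [set x2; o]) :\: [set x1; flip x1 l'].
  apply/setP => nu; rewrite !inE -/x2.
  case: (eqVneq nu e) => [->|Ne].
    by rewrite (negbTE ne1) (negbTE ne2).
  case: (eqVneq nu o) => [->|No].
    by rewrite eq_sym (negbTE ne5) eq_sym (negbTE ne6) !orbT.
  by case: (nu == x1); case: (nu == x2).
apply: rD => nu; rewrite !inE -/x2 => /orP [] ->; by rewrite ?orbT.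
Qed.

Lemma main_ind k n (S : {set {set 'I_k.+1}}) :
  #|S| <= n -> (\sum_(nu in S) (-1) ^+ #|nu| = 0 :> int)%R -> rep S.
Proof.
elim: n S => [|n IH] S Hc Hs.
  by move: Hc; rewrite leqn0 => /eqP/cards0_eq ->; exact: rep0.
case: (set_0Vmem S) => [->|[x Hx]]; first exact: rep0.
have Hne : #|S| != 0 by apply/eqP => /cards0_eq E; rewrite E inE in Hx.
have [e He Hee] : exists2 e, e \in S & ~~ odd #|e|.
  case: (boolP [exists e in S, ~~ odd #|e|]) => [/exists_inP [e ? ?]|]; first by exists e.
  rewrite negb_exists_in => /forall_inP Hall; exfalso.
  rewrite (eq_bigr (fun _ => -1)%R) in Hs; last first.
    by move=> i /Hall; rewrite negbK => Hi; rewrite -signr_odd Hi expr1.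
  move: Hs; rewrite sumr_const mulNrn => /eqP; rewrite oppr_eq0 pnatr_eq0.
  by rewrite (negbTE Hne).
have [o Ho Hoo] : exists2 o, o \in S & odd #|o|.
  case: (boolP [exists o in S, odd #|o|]) => [/exists_inP [o ? ?]|]; first by exists o.
  rewrite negb_exists_in => /forall_inP Hall; exfalso.
  rewrite (eq_bigr (fun _ => 1)%R) in Hs; last first.
    by move=> i /Hall /negbTE Hi; rewrite -signr_odd Hi expr0.
  move: Hs; rewrite sumr_const => /eqP; rewrite pnatr_eq0.
  by rewrite (negbTE Hne).
have neo : e != o by apply: contraNneq Hee => ->.
have sub : [set e; o] \subset S by apply/subsetP => nu; rewrite !inE => /orP [] /eqP ->.
have HSI : S :&: [set e; o] = [set e; o] by apply/setIidPr.
set S' := S :\: [set e; o].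
have Hs' : (\sum_(nu in S') (-1) ^+ #|nu| = 0 :> int)%R.
  move: Hs; rewrite (@big_setID _ _ _ _ S [set e; o]) HSI /= big_setU1 /=; last by rewrite inE.
  rewrite big_set1 -(signr_odd _ #|e|) -(signr_odd _ #|o|) (negbTE Hee) Hoo.
  by rewrite expr0 expr1 subrr add0r.
have Hc' : #|S'| <= n.
  by rewrite /S' cardsD HSI cards2 neo; lia.
have rS' := IH _ Hc' Hs'.
have rP : rep [set e; o].
  have Hodd : odd #|sd e o| by rewrite odd_sd (negbTE Hee) Hoo.
  apply: (@rep_pair _ (#|sd e o|)./2).
  by rewrite -{1}(odd_double_half #|sd e o|) Hodd add1n.
have -> : S = [set e; o] :|: S'.
  by rewrite /S' -{1}(setID S [set e; o]) HSI.
apply: rep_union => // nu; rewrite /S' !inE.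
by case: (nu == e); case: (nu == o).
Qed.

Theorem proposition5p1 (k : nat) (hk : 1 <= k) (phi : bfun k) :
  eul phi = 0%R -> fragmentable phi.
Proof.
move=> H.
have [|t [h d e]] := @main_ind k _ [set nu | phi nu] (leqnn _).
  by apply: etrans H; apply: eq_bigl => nu; rewrite inE.
by exists t; split => // nu; rewrite e inE.
Qed.
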